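(* Let $\mathbb{F}$ be a field, $m,b\in\mathbb{F}$ with $m\ne0$, $m\neq1$, let $\mathfrak{A}$ be the unital associative $\mathbb{F}$-algebra generated by $A,B$ subject to $AB=mBA+bI$, and let $C=AB-BA$. For every positive integer $k$, $$(1-m^{k+1})C^{k+1}=(1-m^k)\,b\,C^k-\frac{\big((\mathrm{ad}\,B)\circ(\mathrm{ad}\,C)^k\big)(A)}{(1-m)^{k-1}m^{-k}}.$$
   Context: $[P,Q]=PQ-QP$; for $U\in\mathfrak{A}$, $\mathrm{ad}\,U:\mathfrak{A}\to\mathfrak{A}$ is $V\mapsto[U,V]$, and $(\mathrm{ad}\,U)^k$ is its $k$-fold composition. *)

(* Defs.v *)
From HB Require Import structures.
From mathcomp Require Import all_boot all_order all_algebra.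
Set Implicit Arguments. Unset Strict Implicit. Unset Printing Implicit Defensive.
Import GRing.Theory.
Local Open Scope ring_scope.

Definition lie (R : pzRingType) (P Q : R) : R := P * Q - Q * P.

Definition ad (R : pzRingType) (U : R) : R -> R := fun V => lie U V.

(* Main.v *)
Require Import Defs.
From HB Require Import structures.
From mathcomp Require Import all_boot all_order all_algebra.
From mathcomp Require Import ring.
Import GRing.Theory.
Set Implicit Arguments. Unset Strict Implicit.
Local Open Scope ring_scope.

Fact lc_key : unit. Proof. by []. Qed.
Definition lc {F : pzRingType} {V : lmodType F} (u v : V) (x y : F) := locked_with lc_key (x *: u + y *: v).
Section LC.
Variables (F : comPzRingType) (V : lmodType F) (u v : V).
Lemma lcZu x : x *: u = lc u v x 0. Proof. by rewrite /lc !unlock scale0r addr0. Qed.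
Lemma lcZv y : y *: v = lc u v 0 y. Proof. by rewrite /lc !unlock scale0r add0r. Qed.
Lemma lcD x y x' y' : lc u v x y + lc u v x' y' = lc u v (x + x') (y + y').
Proof. by rewrite /lc !unlock !scalerDl addrACA. Qed.
Lemma lcN x y : - lc u v x y = lc u v (- x) (- y).
Proof. by rewrite /lc !unlock opprD !scaleNr. Qed.
Lemma lcB x y x' y' : lc u v x y - lc u v x' y' = lc u v (x - x') (y - y').
Proof. by rewrite lcN lcD. Qed.
Lemma lcZ c x y : c *: lc u v x y = lc u v (c * x) (c * y).
Proof. by rewrite /lc !unlock scalerDr !scalerA. Qed.
Lemma lcE x y x' y' : x = x' -> y = y' -> lc u v x y = lc u v x' y'.
Proof. by move=> -> ->. Qed.
End LC.

Ltac lcnorm u v :=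
  try rewrite -(scale1r u); try rewrite -(scale1r v);
  rewrite ?(lcZu u v) ?(lcZv u v);
  rewrite ?lcB ?lcN ?lcD ?lcZ ?lcB ?lcN ?lcD ?lcZ ?lcB ?lcN ?lcD ?lcZ;
  apply: lcE; rewrite ?exprS; ring.

Section S.
Variables (F : fieldType) (Alg : algType F) (m b : F) (A B : Alg).
Hypothesis hrel : A * B = m *: (B * A) + b%:A.
Hypotheses (hm0 : m != 0) (hm1 : m != 1).
Let C := lie A B.
Lemma e1 : A * (B * A) = m *: (B * (A * A)) + b *: A.
Proof. by rewrite mulrA hrel mulrDl -scalerAl mulr_algl mulrA. Qed.
Lemma e2 : A * (A * B) = m *: (A * (B * A)) + b *: A.
Proof. by rewrite hrel mulrDr -scalerAr mulr_algr. Qed.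
Lemma hAC : A * C = m *: (C * A).
Proof.
rewrite /C /lie mulrBr mulrBl -!mulrA e2 e1.
set u := B * (A * A); set v := A; clearbody u v.
lcnorm u v.
Qed.
Lemma hCB : C * B = m *: (B * C).
Proof.
have e3 : A * (B * B) = m *: (B * (A * B)) + b *: B.
  by rewrite [A * (B * B)]mulrA {1}hrel mulrDl -scalerAl mulr_algl -mulrA.
have e4 : B * (A * B) = m *: (B * (B * A)) + b *: B.
  by rewrite hrel mulrDr -scalerAr mulr_algr.
rewrite /C /lie mulrBr mulrBl -!mulrA e3 e4.
set u := B * (B * A); set v := B; clearbody u v.
lcnorm u v.
Qed.
Lemma iterC k : iter k (ad C) A = (1 - m) ^+ k *: (C ^+ k * A).
Proof.
elim: k => [|k IH]; first by rewrite expr0 scale1r mul1r.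
rewrite iterS IH /ad /lie -scalerAr -scalerAl -mulrA hAC -scalerAr mulrA -exprS.
rewrite mulrA -exprSr scalerA -scalerBl exprS; apply: (congr1 (fun c => c *: _)); rewrite exprS; ring.
Qed.
Lemma hCBk k : C ^+ k * B = m ^+ k *: (B * C ^+ k).
Proof.
elim: k => [|k IH]; first by rewrite !expr0 scale1r mul1r mulr1.
rewrite exprS -mulrA IH -scalerAr mulrA hCB -scalerAl -mulrA -exprS scalerA.
by rewrite [m ^+ k.+1]exprSr.
Qed.
Lemma hBA : (m - 1) *: (B * A) = C - b%:A.
Proof. rewrite /C /lie hrel. lcnorm (B * A) (1 : Alg). Qed.
Lemma hAB : (m - 1) *: (A * B) = m *: C - b%:A.
Proof. rewrite /C /lie hrel. lcnorm (B * A) (1 : Alg). Qed.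
Lemma adZ (c : F) (X : Alg) : ad B (c *: X) = c *: ad B X.
Proof. by rewrite /ad /lie -scalerAr -scalerAl scalerBr. Qed.
Lemma key k : ((m - 1) * m ^+ k) *: ad B (C ^+ k * A)
  = (1 - m ^+ k.+1) *: C ^+ k.+1 - ((1 - m ^+ k) * b) *: C ^+ k.
Proof.
have h1 : m ^+ k *: ad B (C ^+ k * A) = C ^+ k * (B * A) - C ^+ k * (m ^+ k *: (A * B)).
  rewrite /ad /lie scalerBr [B * (C ^+ k * A)]mulrA scalerAl -hCBk -mulrA.
  by rewrite -mulrA scalerAr.
rewrite -[((m - 1) * m ^+ k) *: _]scalerA h1 scalerBr [(m - 1) *: (C ^+ k * (B * A))]scalerAr [(m - 1) *: (C ^+ k * _)]scalerAr hBA scalerA [(m - 1) * _]mulrC -[(m ^+ k * (m - 1)) *: _]scalerA hAB.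
rewrite [C ^+ k.+1]exprSr [C ^+ k * (C - _)]mulrBr mulr_algr -(scalerAr (m ^+ k)).
rewrite [C ^+ k * (m *: C - _)]mulrBr -(scalerAr m) mulr_algr.
set u := C ^+ k * C; set v := C ^+ k. clearbody u v.
lcnorm u v.
Qed.
Lemma main k : (0 < k)%N ->
  (1 - m ^+ k.+1) *: C ^+ k.+1 =
    ((1 - m ^+ k) * b) *: C ^+ k
    - ((1 - m) ^+ k.-1 * m ^- k)^-1 *: ad B (iter k (ad C) A).
Proof.
case: k => // k _.
rewrite iterC adZ scalerA /=.
have -> : ((1 - m) ^+ k * m ^- k.+1)^-1 * (1 - m) ^+ k.+1 = - ((m - 1) * m ^+ k.+1).
  have hm1' : 1 - m != 0 by rewrite subr_eq0 eq_sym.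
  by rewrite !exprS; field; rewrite !expf_neq0 ?hm0.
by rewrite scaleNr opprK key; lcnorm (C ^+ k.+2) (C ^+ k.+1).
Qed.
End S.

Unset Implicit Arguments.

Theorem lemma4p6 (F : fieldType) (Alg : algType F) (m b : F)
    (hm0 : m != 0) (hm1 : m != 1) (A B : Alg)
    (hrel : A * B = m *: (B * A) + b%:A)
    (k : nat) (hk : (0 < k)%N) :
  let C := lie A B in
  (1 - m ^+ k.+1) *: C ^+ k.+1 =
    ((1 - m ^+ k) * b) *: C ^+ k
    - ((1 - m) ^+ k.-1 * m ^- k)^-1 *: ad B (iter k (ad C) A).
Proof. exact: (main hrel hm0 hm1 hk). Qed.
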